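(* Let $\mathcal L:\mathbb R^n\to(-\infty,\infty]$ be proper and lower semicontinuous. (i) Let $B\in\mathbb R^{r\times n}$, $b\in\mathbb R^r$, $\lambda\in\mathbb R^r$ with $\lambda>0$ componentwise, and $\Phi_\lambda\in\{\Phi_{0,\lambda},\Phi_{+,\lambda}\}$. If $\mathcal L$ is ALS, then $H(x):=\mathcal L(x)+\Phi_\lambda(Bx-b)$ is ALS. (ii) Suppose in addition that $\mathcal L$ is convex and ALS, that $C\subseteq\mathbb R^n$ is a polyhedral convex set, and that $\operatorname{dom}\mathcal L\cap C\neq\emptyset$. Then $U(x):=\mathcal L(x)+\delta(x\mid C)$ is ALS.
   Context: For $u\in\mathbb R^r$ and $\lambda\in\mathbb R^r$, $\lambda>0$: $\Phi_{0,\lambda}(u)=\sum_{i=1}^r\lambda_i\mathbf 1_{\{u_i\neq0\}}$ and $\Phi_{+,\lambda}(u)=\sum_{i=1}^r\lambda_i\mathbf 1_{\{u_i>0\}}$. $\delta(x\mid C)$ is $0$ if $x\in C$ and $+\infty$ otherwise. For a proper lsc $\psi:\mathbb R^n\to(-\infty,\infty]$, its asymptotic function is $\psi_\infty(d)=\liminf_{\tilde d\to d,\ t\to+\infty}\psi(t\tilde d)/t$ and $\operatorname{Ker}\psi_\infty=\{d:\psi_\infty(d)=0\}$; $\operatorname{lev}(\psi,\tau)=\{x:\psi(x)\le\tau\}$. $\psi$ is called asymptotically level stable (ALS) if for each $\rho>0$, each bounded sequence of reals $\{\tau_k\}$ and each sequence $\{x^k\}$ with $x^k\in\operatorname{lev}(\psi,\tau_k)$,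 $\|x^k\|\to\infty$, $x^k/\|x^k\|\to\bar x\in\operatorname{Ker}\psi_\infty$, there is $k_0$ with $x^k-\rho\bar x\in\operatorname{lev}(\psi,\tau_k)$ for all $k\ge k_0$. *)

(* Defs.v *)
From HB Require Import structures.
From mathcomp Require Import all_boot all_order all_algebra.
From mathcomp Require Import all_classical all_reals all_analysis.
Set Implicit Arguments. Unset Strict Implicit. Unset Printing Implicit Defensive.
Import Order.TTheory GRing.Theory Num.Theory.
Import numFieldNormedType.Exports.
Local Open Scope classical_set_scope.
Local Open Scope ring_scope.

Definition enorm (R : realType) (n : nat) (x : 'cV[R]_n) : R :=
  Num.sqrt (\sum_(i < n) x i 0 ^+ 2).

Definition proper_fun (R : realType) (n : nat) (f : 'cV[R]_n -> \bar R) : Prop :=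
  (forall x, f x <> -oo%E) /\ (exists x, f x <> +oo%E).

Definition edom (R : realType) (n : nat) (f : 'cV[R]_n -> \bar R) : set 'cV[R]_n :=
  [set x | (f x < +oo)%E].

Definition lev (R : realType) (n : nat) (f : 'cV[R]_n -> \bar R) (tau : R) : set 'cV[R]_n :=
  [set x | (f x <= tau%:E)%E].

(* asymptotic function:
   f_oo(d) = liminf_{d' -> d, t -> +oo} f (t d') / t *)
Definition asymptotic_fun (R : realType) (n : nat) (f : 'cV[R]_n -> \bar R)
  (d : 'cV[R]_n) : \bar R :=
  limf_einf (fun p : 'cV[R]_n * R => (f (p.2 *: p.1) * (p.2^-1)%:E)%E)
    (filter_prod (nbhs d) (@pinfty_nbhs R)).

Definition asymptotic_kernel (R : realType) (n : nat) (f : 'cV[R]_n -> \bar R)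
  : set 'cV[R]_n := [set d | asymptotic_fun f d = 0%E].

Definition ALS (R : realType) (n : nat) (f : 'cV[R]_n -> \bar R) : Prop :=
  forall (rho : R), 0 < rho ->
  forall (tau : nat -> R) (x : nat -> 'cV[R]_n) (xbar : 'cV[R]_n),
    (exists M : R, forall k, `|tau k| <= M) ->
    (forall k, lev f (tau k) (x k)) ->
    (fun k => enorm (x k)) @ \oo --> +oo ->
    (fun k => (enorm (x k))^-1 *: x k) @ \oo --> xbar ->
    asymptotic_kernel f xbar ->
    exists k0 : nat, forall k, (k0 <= k)%N -> lev f (tau k) (x k - rho *: xbar).

Definition Phi0 (R : realType) (r : nat) (lam : 'cV[R]_r) (u : 'cV[R]_r) : R :=
  \sum_(i < r) (if u i 0 != 0 then lam i 0 else 0).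

Definition Phiplus (R : realType) (r : nat) (lam : 'cV[R]_r) (u : 'cV[R]_r) : R :=
  \sum_(i < r) (if 0 < u i 0 then lam i 0 else 0).

Definition indicator_fun (R : realType) (n : nat) (C : set 'cV[R]_n) (x : 'cV[R]_n)
  : \bar R := if `[< C x >] then 0%E else +oo%E.

Definition convex_efun (R : realType) (n : nat) (f : 'cV[R]_n -> \bar R) : Prop :=
  forall (x y : 'cV[R]_n) (t : R), 0 < t < 1 ->
    (f (t *: x + (1 - t) *: y)%R <= t%:E * f x + (1 - t)%:E * f y)%E.

Definition polyhedral (R : realType) (n : nat) (C : set 'cV[R]_n) : Prop :=
  exists (m : nat) (A : 'M[R]_(m, n)) (a : 'cV[R]_m),
    C = [set x | forall i : 'I_m, (A *m x) i 0 <= a i 0].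

(* Main.v *)
Require Import Defs.
From HB Require Import structures.
From mathcomp Require Import all_boot all_order all_algebra.
From mathcomp Require Import all_classical all_reals all_analysis.
From mathcomp Require Import ring lra.
Import Order.TTheory GRing.Theory Num.Theory.
Import numFieldNormedType.Exports.
Local Open Scope classical_set_scope.
Local Open Scope ring_scope.

Section Aux.
Context {R : realType}.
Local Open Scope ereal_scope.

Lemma liminf_neg (n : nat) (F : set_system ('cV[R]_n * R)) (g : 'cV[R]_n * R -> \bar R) :
  limf_einf g F < 0 -> exists2 e : R, (0 < e)%R & forall V, F V -> exists2 p, V p & g p < (- e)%:E.
Proof.
move=> hl.
have [e e0 le] : exists2 e : R, (0 < e)%R & limf_einf g F < (- e)%:E.
  move: hl; case: (limf_einf g F) => [r| |] //=.
  - rewrite lte_fin => r0; exists (- r / 2)%R; first by lra.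
    rewrite lte_fin; lra.
  - by move=> _; exists 1%R => //; rewrite ltNye.
exists e => // V FV.
have : ereal_inf (g @` V) < (- e)%:E.
  apply: le_lt_trans le; rewrite limf_einfE; apply: ereal_sup_ubound; by exists V.
by move=> /ereal_inf_lt [y [p Vp <-]] gp; exists p.
Qed.

Lemma liminf_le (n : nat) (F : set_system ('cV[R]_n * R)) (g : 'cV[R]_n * R -> \bar R) (c : \bar R) :
  (forall V, F V -> exists2 p, V p & g p <= c) -> limf_einf g F <= c.
Proof.
move=> H; rewrite limf_einfE; apply: ub_ereal_sup => y [V FV <-].
have [p Vp gp] := H V FV; apply: ge_ereal_inf; exists (g p) => //; by exists p.
Qed.
End Aux.
Section Aux2.
Context {R : realType}.

Lemma ev_gt {T} (G : set_system T) {FG : Filter G} (u N : T -> R) (c K : R) :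
  0 < c -> (fun k => (N k)^-1 * u k) @ G --> c -> N @ G --> +oo ->
  \forall k \near G, K < u k.
Proof.
move=> c0 hu hN.
have h1 := cvgr_gt c hu (c/2) ltac:(lra).
have h2 := @cvgry_gt R T G FG N hN (1 + 2 * `|K| / c).
near=> k.
have Hq : c/2 < (N k)^-1 * u k by near: k; exact: h1.
have HN : 1 + 2 * `|K| / c < N k by near: k; exact: h2.
have Kn : 0 <= `|K| by [].
have Kl : K <= `|K| by exact: ler_norm.
set D := 2 * `|K| / c in HN.
have D0 : 0 <= D by rewrite /D; apply: divr_ge0 => //; lra.
have Dc : D * (c / 2) = `|K| by rewrite /D; field; rewrite gt_eqF.
have Nk0 : N k != 0 by rewrite gt_eqF //; lra.
have -> : u k = N k * ((N k)^-1 * u k) by rewrite mulrA mulfV // mul1r.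
set q := (N k)^-1 * u k in Hq *.
nra.
Unshelve. all: end_near.
Qed.

Lemma cvg_bigsum {T} (G : set_system T) {FG : Filter G} (m : nat)
  (f : 'I_m -> T -> R) (a : 'I_m -> R) :
  (forall j, f j @ G --> a j) -> (fun t => \sum_(j < m) f j t) @ G --> \sum_(j < m) a j.
Proof.
elim: m f a => [|m IH] f a H.
  under eq_fun do rewrite big_ord0. rewrite big_ord0; exact: cvg_cst.
under eq_fun do rewrite big_ord_recr /=. rewrite big_ord_recr /=.
apply: cvgD; last exact: H.
exact: (IH (fun j => f (widen_ord (leqnSn m) j)) (fun j => a (widen_ord (leqnSn m) j))).
Qed.

Lemma cvg_row {T} (G : set_system T) {FG : Filter G} (r n : nat) (B : 'M[R]_(r, n))
  (y : T -> 'cV[R]_n) (yb : 'cV[R]_n) (i : 'I_r) :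
  y @ G --> yb -> (fun t => (B *m y t) i 0) @ G --> (B *m yb) i 0.
Proof.
move=> hy.
under eq_fun do rewrite mxE. rewrite mxE.
apply: cvg_bigsum => j.
apply: cvgMr.
have := @coord_continuous R n 1 j 0 yb.
move=> hc. exact: (cvg_comp _ _ hy hc).
Qed.
End Aux2.
Section Aux3.
Context {R : realType}.
Context {n : nat}.

Lemma pair_ev {T} {G : set_system T} {FG : Filter G} {d : T -> 'cV[R]_n} {t : T -> R} {xb : 'cV[R]_n} :
  d @ G --> xb -> t @ G --> +oo ->
  forall V, filter_prod (nbhs xb) (@pinfty_nbhs R) V -> \forall s \near G, V (d s, t s).
Proof.
move=> hd ht V [[A B] /= [nA nB] sub].
near=> s; apply: sub; split => /=.
- near: s. exact: hd nA.
- near: s. exact: ht nB.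
Unshelve. all: end_near.
Qed.
End Aux3.
Section Aux4.
Context {R : realType}.
Context {n : nat}.

Lemma kernel_le0 (f : 'cV[R]_n -> \bar R) (x : nat -> 'cV[R]_n) (xb : 'cV[R]_n) (M : R) :
  (forall k, (f (x k) <= M%:E)%E) -> (fun k => enorm (x k)) @ \oo --> +oo ->
  (fun k => (enorm (x k))^-1 *: x k) @ \oo --> xb -> (asymptotic_fun f xb <= 0)%E.
Proof.
move=> hM hN hx; apply/lee_addgt0Pr => e e0; rewrite add0e.
apply: liminf_le => V FV.
have h1 := pair_ev hx hN V FV.
have h2 := cvgry_gt hN (1 + `|M| / e).
have [k [Vk Nk]] : exists k, V ((enorm (x k))^-1 *: x k, enorm (x k)) /\ 1 + `|M| / e < enorm (x k).
  apply: (@filter_ex _ (\oo : set_system nat) _); near=> k; split; near: k; [exact: h1|exact: h2].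
  Unshelve. all: end_near.
exists ((enorm (x k))^-1 *: x k, enorm (x k)) => //=.
set N := enorm (x k) in Nk *.
have Me : e * (`|M| / e) = `|M| by field; rewrite gt_eqF.
have Mab : 0 <= `|M| / e by apply: divr_ge0 => //; lra.
have N0 : 0 < N by lra.
rewrite scalerA mulfV ?gt_eqF // scale1r.
apply: le_trans (lee_wpmul2r _ (hM k)) _; first by rewrite lee_fin invr_ge0 ltW.
rewrite -EFinM lee_fin ler_pdivrMr //.
have := ler_norm M; nra.
Qed.
End Aux4.
Section Aux5.
Context {R : realType}.

Lemma cvgN_scaled (u N : nat -> R) (c : R) :
  (fun k => (N k)^-1 * u k) @ \oo --> c -> (fun k => (N k)^-1 * - u k) @ \oo --> - c.
Proof.
move=> h; under eq_fun do rewrite mulrN; exact: cvgN.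
Qed.

Lemma sign_stable (u N : nat -> R) (c beta rho : R) :
  0 < rho -> (fun k => (N k)^-1 * u k) @ \oo --> c -> N @ \oo --> +oo ->
  \forall k \near \oo, ((u k - rho * c - beta != 0) = (u k - beta != 0)) /\
                       ((0 < u k - rho * c - beta) = (0 < u k - beta)).
Proof.
move=> r0 hu hN.
have [c0|c0|->] := ltgtP c 0; last first.
- by near=> k; rewrite mulr0 subr0.
- have := ev_gt (\oo) u N c (`|beta| + rho * c) c0 hu hN.
  move=> h; near=> k.
  have hk : `|beta| + rho * c < u k by near: k; exact: h.
  have := ler_norm beta => hb.
  have h1 : 0 < u k - beta by nra.
  have h2 : 0 < u k - rho * c - beta by nra.
  by rewrite h1 h2 (gt_eqF h1) (gt_eqF h2).
- have := ev_gt (\oo) (fun k => - u k) N (- c) (`|beta| + rho * (- c)) ltac:(lra) (cvgN_scaled _ _ _ hu) hN.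
  move=> h; near=> k.
  have hk : `|beta| + rho * (- c) < - u k by near: k; exact: h.
  have := ler_norm (- beta); rewrite normrN => hb.
  have h1 : u k - beta < 0 by nra.
  have h2 : u k - rho * c - beta < 0 by nra.
  by rewrite (lt_eqF h1) (lt_eqF h2) (lt_gtF h1) (lt_gtF h2).
Unshelve. all: end_near.
Qed.

Lemma poly_stable (u N : nat -> R) (c a rho : R) :
  0 < rho -> (fun k => (N k)^-1 * u k) @ \oo --> c -> N @ \oo --> +oo ->
  (forall k, u k <= a) ->
  c <= 0 /\ \forall k \near \oo, u k - rho * c <= a.
Proof.
move=> r0 hu hN ha.
have cle : c <= 0.
  rewrite leNgt; apply/negP => c0.
  have := ev_gt (\oo) u N c a c0 hu hN.
  move=> h; have [k hk] := @filter_ex _ (\oo : set_system nat) _ _ (h _).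
  by have := ha k; lra.
split => //.
have [c0|->] : c < 0 \/ c = 0 by move: cle; rewrite le_eqVlt => /orP[/eqP->|->]; [right|left].
- have := ev_gt (\oo) (fun k => - u k) N (- c) (- a + rho * (- c)) ltac:(lra) (cvgN_scaled _ _ _ hu) hN.
  move=> h; near=> k.
  have hk : - a + rho * (- c) < - u k by near: k; exact: h.
  lra.
- by near=> k; rewrite mulr0 subr0.
Unshelve. all: end_near.
Qed.
End Aux5.
Section Aux6.
Context {R : realType}.
Local Open Scope ereal_scope.

Lemma eadd_le (a : \bar R) (p t : R) : a <= (t - p)%:E -> a + p%:E <= t%:E.
Proof.
case: a => [x| |] h.
- by rewrite lee_fin in h; rewrite -EFinD lee_fin; lra.
- by rewrite leye_eq in h.
- by rewrite leNye.
Qed.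

Lemma eadd_le' (a : \bar R) (p t : R) : a + p%:E <= t%:E -> a <= (t - p)%:E.
Proof.
case: a => [x| |] h.
- by rewrite -EFinD lee_fin in h; rewrite lee_fin; lra.
- by rewrite leye_eq in h.
- by rewrite leNye.
Qed.

Lemma ev_nat (P : nat -> Prop) : (\forall k \near \oo, P k) -> exists k0, forall k, (k0 <= k)%N -> P k.
Proof. by move=> [k0 _ h]; exists k0 => k hk; apply: h. Qed.

Lemma pinfty_gt (n : nat) (xb : 'cV[R]_n) (c : R) :
  filter_prod (nbhs xb) (@pinfty_nbhs R) [set p | (c < p.2)%R].
Proof.
exists (setT, [set t | (c < t)%R]) => /=.
  split; first exact: filterT.
  by exists c; split; [exact: num_real | move=> x].
by move=> [p1 p2] [_ /=].
Qed.

Lemma mulye_pos (t : R) : (0 < t)%R -> +oo * t%:E = +oo.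
Proof. by move=> t0; rewrite mulyr gtr0_sg // mul1e. Qed.
End Aux6.
Section Part1.
Context {R : realType} {n : nat}.

Lemma Phi_bounds (r : nat) (lam : 'cV[R]_r) (Phi : 'cV[R]_r -> R) :
  (forall i : 'I_r, 0 < lam i 0) -> (Phi = Phi0 lam \/ Phi = Phiplus lam) ->
  forall u, 0 <= Phi u /\ Phi u <= \sum_(i < r) lam i 0.
Proof.
move=> hl [->|->] u; rewrite /Phi0 /Phiplus; split.
- by apply: sumr_ge0 => i _; case: ifP => // _; exact: ltW.
- by apply: ler_sum => i _; case: ifP => // _; exact: ltW.
- by apply: sumr_ge0 => i _; case: ifP => // _; exact: ltW.
- by apply: ler_sum => i _; case: ifP => // _; exact: ltW.
Qed.

Lemma Phi_eq (r : nat) (lam : 'cV[R]_r) (Phi : 'cV[R]_r -> R) (u v : 'cV[R]_r) :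
  (Phi = Phi0 lam \/ Phi = Phiplus lam) ->
  (forall i : 'I_r, ((u i 0 != 0) = (v i 0 != 0)) /\ ((0 < u i 0) = (0 < v i 0))) ->
  Phi u = Phi v.
Proof.
move=> [->|->] h; rewrite /Phi0 /Phiplus; apply: eq_bigr => i _; case: (h i) => h1 h2; by rewrite ?h1 ?h2.
Qed.

Lemma part1 (L : 'cV[R]_n -> \bar R) :
  proper_fun L ->
  forall (r : nat) (B : 'M[R]_(r, n)) (b lam : 'cV[R]_r) (Phi : 'cV[R]_r -> R),
     (forall i : 'I_r, 0 < lam i 0) ->
     (Phi = Phi0 lam \/ Phi = Phiplus lam) ->
     ALS L ->
     ALS (fun x => (L x + (Phi (B *m x - b))%:E)%E).
Proof.
move=> [Lnoo _] r B b lam Phi hlam hPhi hALS.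
move=> rho rho0 tau x xb [M hM] hlev hN hx hker.
set S := \sum_(i < r) lam i 0.
have S0 : 0 <= S by apply: sumr_ge0 => i _; exact: ltW.
have hPb := Phi_bounds r lam Phi hlam hPhi.
set P := fun k => Phi (B *m x k - b).
have hLk : forall k, (L (x k) <= (tau k - P k)%:E)%E.
  by move=> k; apply: eadd_le'; exact: hlev k.
have hLM : forall k, (L (x k) <= M%:E)%E.
  move=> k; apply: le_trans (hLk k) _; rewrite lee_fin.
  have := hPb (B *m x k - b); have := hM k; have := ler_norm (tau k); rewrite /P; lra.
have kerL : asymptotic_kernel L xb.
  rewrite /asymptotic_kernel /=; apply/eqP; rewrite eq_le; apply/andP; split.
    exact: (kernel_le0 L x xb M hLM hN hx).
  rewrite leNgt; apply/negP => /liminf_neg [e e0 he].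
  have : (asymptotic_fun (fun x => (L x + (Phi (B *m x - b))%:E)%E) xb <= (- (e/2))%:E)%E.
    apply: liminf_le => V FV.
    have FV' := filterI FV (pinfty_gt _ xb (2 * S / e + 1)).
    have [p [Vp hp] hLp] := he _ (FV' _).
    exists p => //.
    move: hp hLp => /= hp; set t := p.2 in hp *; set y := t *: p.1.
    have t0 : 0 < t.
      have : 0 <= 2 * S / e by apply: divr_ge0; lra.
      lra.
    have [Ph0 PhS] := hPb (B *m y - b).
    case E: (L y) => [ly| |] //=.
    + rewrite -EFinD -!EFinM !lte_fin !lee_fin => hly.
      have hS : S / t <= e / 2.
        rewrite ler_pdivrMr //.
        have : e * (2 * S / e) = 2 * S by field; rewrite gt_eqF.
        nra.
      have : Phi (B *m y - b) / t <= S / t by rewrite ler_pM2r // invr_gt0.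
      rewrite mulrDl; lra.
    + by rewrite mulye_pos ?invr_gt0 // => /lt_le_trans /(_ (leey _)); rewrite ltNge leey.
    + by move: (Lnoo y); rewrite E.
  by rewrite hker lee_fin; lra.
have hb : exists M0 : R, forall k, `|tau k - P k| <= M0.
  exists (M + S) => k; apply: le_trans (ler_normB _ _) _.
  have [h0 h1] := hPb (B *m x k - b).
  have h1' : P k <= S := h1.
  have h0' : 0 <= P k := h0.
  rewrite (ger0_norm h0'); have := hM k; lra.
have [k0 hk0] := hALS rho rho0 (fun k => tau k - P k) x xb hb hLk hN hx kerL.
have hev : \forall k \near \oo, forall i : 'I_r,
    (((B *m (x k - rho *: xb) - b) i 0 != 0) = ((B *m x k - b) i 0 != 0)) /\
    ((0 < (B *m (x k - rho *: xb) - b) i 0) = (0 < (B *m x k - b) i 0)).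
  apply: filter_forall => i.
  have hu : (fun k => (enorm (x k))^-1 * (B *m x k) i 0) @ \oo --> (B *m xb) i 0.
    have := @cvg_row R nat \oo _ r n B _ xb i hx.
    have -> : (fun k => (B *m ((enorm (x k))^-1 *: x k)) i 0) =
              (fun k => (enorm (x k))^-1 * (B *m x k) i 0).
      by apply: funext => k; rewrite -scalemxAr mxE.
    by move=> h; exact: h.
  have := sign_stable (fun k => (B *m x k) i 0) (fun k => enorm (x k)) ((B *m xb) i 0) (b i 0) rho rho0 hu hN.
  apply: filterS => k [h1 h2].
  have e1 : (B *m (x k - rho *: xb) - b) i 0 = (B *m x k) i 0 - rho * (B *m xb) i 0 - b i 0.
    by rewrite mulmxBr -scalemxAr !mxE.
  have e2 : (B *m x k - b) i 0 = (B *m x k) i 0 - b i 0 by rewrite !mxE.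
  by rewrite e1 e2.
have [k1 hk1] := ev_nat _ hev.
exists (maxn k0 k1) => k hk.
rewrite /lev /=.
have -> : Phi (B *m (x k - rho *: xb) - b) = P k.
  apply: (Phi_eq r lam Phi _ _ hPhi); apply: hk1; exact: leq_trans (leq_maxr _ _) hk.
apply: eadd_le; apply: hk0; exact: leq_trans (leq_maxl _ _) hk.
Qed.
End Part1.
Section Part2.
Context {R : realType} {n : nat}.

Lemma inv_cvg0 {T} {G : set_system T} {FG : Filter G} (t : T -> R) :
  t @ G --> +oo -> (fun s => (t s)^-1) @ G --> (0 : R).
Proof.
move=> ht; apply/cvgr0Pnorm_lt => eps eps0.
have h := cvgry_gt ht (eps^-1).
near=> s.
have hs : eps^-1 < t s by near: s; exact: h.
have ei : eps * eps^-1 = 1 by rewrite mulfV // gt_eqF.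
have e1 : 0 < eps^-1 by rewrite invr_gt0.
have t0 : 0 < t s by lra.
rewrite gtr0_norm ?invr_gt0 // -[(t s)^-1]mul1r ltr_pdivrMr //.
nra.
Unshelve. all: end_near.
Qed.
End Part2.
Section Part2b.
Context {R : realType} {n : nat}.

Lemma part2 (L : 'cV[R]_n -> \bar R) :
  proper_fun L -> lower_semicontinuous L ->
  forall C : set 'cV[R]_n,
     convex_efun L -> ALS L -> polyhedral C ->
     edom L `&` C !=set0 ->
     ALS (fun x => (L x + indicator_fun C x)%E).
Proof.
move=> [Lnoo _] Llsc C Lconv hALS [m [A [a hC]]] [z [zdom zC]].
move=> rho rho0 tau x xb [M hM] hlev hN hx hker.
have hxC : forall k, C (x k) /\ (L (x k) <= (tau k)%:E)%E.
  move=> k; have := hlev k; rewrite /lev /= /indicator_fun.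
  case: asboolP => hc.
    by rewrite adde0.
  have Ln : L (x k) != -oo%E by apply/eqP; exact: Lnoo.
  by rewrite (addey Ln) leye_eq.
have hrow : forall i : 'I_m, (A *m xb) i 0 <= 0 /\
    \forall k \near \oo, (A *m x k) i 0 - rho * (A *m xb) i 0 <= a i 0.
  move=> i.
  have hu : (fun k => (enorm (x k))^-1 * (A *m x k) i 0) @ \oo --> (A *m xb) i 0.
    have := @cvg_row R nat \oo _ m n A _ xb i hx.
    have -> : (fun k => (A *m ((enorm (x k))^-1 *: x k)) i 0) =
              (fun k => (enorm (x k))^-1 * (A *m x k) i 0).
      by apply: funext => k; rewrite -scalemxAr mxE.
    by move=> h; exact: h.
  apply: (poly_stable _ _ _ _ rho rho0 hu hN) => k.
  have := (hxC k).1; rewrite hC; exact.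
have hCxb : forall i, (A *m xb) i 0 <= 0 by move=> i; exact: (hrow i).1.
have zsx : forall s, 0 <= s -> C (z + s *: xb).
  move=> s s0; rewrite hC /= => i.
  have := zC; rewrite hC /= => /(_ i) hz.
  have e : (A *m (z + s *: xb)) i 0 = (A *m z) i 0 + s * (A *m xb) i 0.
    by rewrite mulmxDr -scalemxAr !mxE.
  rewrite e; have := hCxb i; nra.
have Lzfin : L z = (fine (L z))%:E.
  move: zdom (Lnoo z); rewrite /edom /=; case: (L z) => //.
set lz := fine (L z).
have kerL : asymptotic_kernel L xb.
  rewrite /asymptotic_kernel /=; apply/eqP; rewrite eq_le; apply/andP; split.
    apply: (kernel_le0 L x xb M) => // k; apply: le_trans (hxC k).2 _.
    rewrite lee_fin; have := hM k; have := ler_norm (tau k); lra.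
  rewrite leNgt; apply/negP => /liminf_neg [e e0 he].
  have hs : forall s, 0 < s -> (L (z + s *: xb)%R <= (`|lz| - s * e)%:E)%E.
    move=> s s0; rewrite leNgt; apply/negP => hlt.
    have [W nW hW] := Llsc _ _ hlt.
    have hphi : (fun p : 'cV[R]_n * R => z + s *: (p.1 - (p.2)^-1 *: z)) @
        filter_prod (nbhs xb) (@pinfty_nbhs R) --> z + s *: (xb - 0 *: z).
      apply: cvgD; first exact: cvg_cst.
      apply: cvgZ; first exact: cvg_cst.
      apply: cvgB; first exact: cvg_fst.
      apply: cvgZ; last exact: cvg_cst.
      apply: inv_cvg0; exact: cvg_snd.
    rewrite scale0r subr0 in hphi.
    have FW : filter_prod (nbhs xb) (@pinfty_nbhs R)
        ((fun p : 'cV[R]_n * R => z + s *: (p.1 - (p.2)^-1 *: z)) @^-1` W) := hphi _ nW.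
    have FG := filterI FW (pinfty_gt _ xb s).
    have [p [Wp sp] hLp] := he _ (FG _).
    move: Wp sp hLp => /= Wp sp.
    set t := p.2 in Wp sp *; set d := p.1 in Wp *.
    have t0 : 0 < t by lra.
    case E: (L (t *: d)) => [ly| |] //=.
    + rewrite -EFinM lte_fin => hly.
      set th := s / t.
      have th0 : 0 < th by rewrite divr_gt0.
      have th1 : th < 1 by rewrite /th ltr_pdivrMr // mul1r.
      have hth : th * t = s by rewrite /th mulfVK // gt_eqF.
      have := Lconv (t *: d) z th ltac:(apply/andP; split => //).
      have -> : th *: (t *: d) + (1 - th) *: z = z + s *: (d - t^-1 *: z).
        apply/matrixP => i j; rewrite !mxE -hth.
        by field; rewrite gt_eqF.
rewrite E Lzfin -!EFinM -EFinD => hconv.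
      have := hW _ Wp => hgt.
      have := lt_le_trans hgt hconv; rewrite lte_fin.
      have hl : th * ly < - (s * e).
        have : ly * t^-1 * s < - e * s by rewrite ltr_pM2r.
        have -> : th * ly = ly * t^-1 * s by rewrite /th; field; rewrite gt_eqF.
        lra.
      have hz : (1 - th) * lz <= `|lz|.
        have := ler_norm lz; have := normr_ge0 lz; nra.
      rewrite -/lz; lra.
    + by rewrite mulye_pos ?invr_gt0 // => /lt_le_trans /(_ (leey _)); rewrite ltNge leey.
    + by move: (Lnoo (t *: d)); rewrite E.
  have : (asymptotic_fun (fun x => (L x + indicator_fun C x)%E) xb <= (- (e/2))%:E)%E.
    apply: liminf_le => V FV.
    have hd : (fun s : R => xb + s^-1 *: z) @ (@pinfty_nbhs R) --> xb.
      rewrite -[X in _ --> X]addr0; apply: cvgD; first exact: cvg_cst.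
      rewrite -(scale0r z); apply: cvgZ; last exact: cvg_cst.
      apply: inv_cvg0; exact: cvg_id.
    have h2 := pair_ev hd (@cvg_id _ (@pinfty_nbhs R)) V FV.
    have h3 := @cvgry_gt R R (@pinfty_nbhs R) _ (fun s => s) cvg_id (1 + 2 * `|lz| / e).
    have [s [Vs hs1]] : exists s, V (xb + s^-1 *: z, s) /\ 1 + 2 * `|lz| / e < s.
      apply: (@filter_ex _ (@pinfty_nbhs R) _); near=> s; split; near: s; [exact: h2|exact: h3].
      Unshelve. all: end_near.
    exists (xb + s^-1 *: z, s) => //=.
    have lz0 : 0 <= 2 * `|lz| / e by apply: divr_ge0 => //; lra.
    have s0 : 0 < s by lra.
    have -> : s *: (xb + s^-1 *: z) = z + s *: xb.
      apply/matrixP => i j; rewrite !mxE; by field; rewrite gt_eqF.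
    rewrite /indicator_fun; case: asboolP => hc; last by exfalso; apply: hc; apply: zsx; lra.
    rewrite adde0.
    apply: le_trans (lee_wpmul2r _ (hs s s0)) _; first by rewrite lee_fin invr_ge0 ltW.
    rewrite -EFinM lee_fin.
    have -> : (`|lz| - s * e) * s^-1 = `|lz| / s - e by field; rewrite gt_eqF.
    have : `|lz| / s <= e / 2.
      rewrite ler_pdivrMr //.
      have : e * (2 * `|lz| / e) = 2 * `|lz| by field; rewrite gt_eqF.
      nra.
    lra.
  by rewrite hker lee_fin; lra.
have hb : exists M0 : R, forall k, `|tau k| <= M0 by exists M.
have [k0 hk0] := hALS rho rho0 tau x xb hb (fun k => (hxC k).2) hN hx kerL.
have hev : \forall k \near \oo, forall i : 'I_m,
    (A *m x k) i 0 - rho * (A *m xb) i 0 <= a i 0.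
  apply: filter_forall => i; exact: (hrow i).2.
have [k1 hk1] := ev_nat _ hev.
exists (maxn k0 k1) => k hk.
rewrite /lev /= /indicator_fun.
case: asboolP => hc.
  rewrite adde0; apply: hk0; exact: leq_trans (leq_maxl _ _) hk.
exfalso; apply: hc; rewrite hC /= => i.
have := hk1 k (leq_trans (leq_maxr _ _) hk) i.
have e : (A *m (x k - rho *: xb)) i 0 = (A *m x k) i 0 - rho * (A *m xb) i 0.
  by rewrite mulmxBr -scalemxAr !mxE.
by rewrite e.
Qed.
End Part2b.

Theorem mainTheorem1 (R : realType) (n : nat) (L : 'cV[R]_n -> \bar R) :
  proper_fun L -> lower_semicontinuous L ->
  (forall (r : nat) (B : 'M[R]_(r, n)) (b lam : 'cV[R]_r)
          (Phi : 'cV[R]_r -> R),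
     (forall i : 'I_r, 0 < lam i 0) ->
     (Phi = Phi0 lam \/ Phi = Phiplus lam) ->
     ALS L ->
     ALS (fun x => (L x + (Phi (B *m x - b))%:E)%E))
  /\
  (forall C : set 'cV[R]_n,
     convex_efun L -> ALS L -> polyhedral C ->
     edom L `&` C !=set0 ->
     ALS (fun x => (L x + indicator_fun C x)%E)).
Proof.
move=> hp hl; split.
- exact: part1.
- exact: part2.
Qed.
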